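(* Let $\beta:\mathcal{U}^{(1)}\to\mathbb{C}[[X]]$ be a continuous linear map. Then there is a continuous unital algebra homomorphism $\bar\beta:\mathcal{U}\to\mathbb{C}[[X]]$ extending $\beta$.
   Context: Let $S$ be the set of finitely supported sequences $r=(r_1,r_2,\dots)$ of nonnegative integers, $|r|=\sum_i r_i$, $X^r=\prod_iX_i^{r_i}$ in commuting indeterminates. $\mathcal{U}$ is the commutative unital Fréchet algebra of formal power series $f=\sum_{r\in S}\alpha_rX^r$ with $q_m(f)=\sum_r|\alpha_r|m^{|r|}<\infty$ for all $m\in\mathbb{N}$, topologized by the norms $(q_m)$. $\mathcal{U}^{(1)}$ is the closed linear subspace of $\mathcal{U}$ of homogeneous linear series $\sum_{i}\alpha_iX_i$ (with $\sum_i|\alpha_i|<\infty$), with the relative topology. $\mathbb{C}[[X]]$ is the algebra of formal power series in one indeterminate with the Fréchet topology of coordinatewise convergence. *)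

(* Defs.v *)
From HB Require Import structures.
From mathcomp Require Import all_boot all_order all_algebra.
From mathcomp Require Import all_classical all_reals.
From mathcomp Require Import ereal esum.
From mathcomp.real_closed Require Import complex.
Set Implicit Arguments. Unset Strict Implicit. Unset Printing Implicit Defensive.
Import Order.TTheory GRing.Theory Num.Theory.
Local Open Scope ring_scope.

(* A finitely supported sequence r = (r_1, r_2, ...) is represented by the
   finite list of its values with trailing zeros removed (canonical form). *)
Fixpoint trim (s : seq nat) : seq nat :=
  match s with
  | [::] => [::]
  | a :: s' => let t := trim s' in
               if (a == 0)%N && nilp t then [::] else a :: t
  end.

Definition is_trimmed (s : seq nat) : bool := trim s == s.

Lemma trim_idem s : trim (trim s) = trim s.
Proof.
elim: s => [|a s IH] //=.
case: ifP => [//|H] /=. by rewrite IH H.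
Qed.

Definition S := {s : seq nat | is_trimmed s}.

Definition toS (s : seq nat) : S :=
  exist _ (trim s) (introT eqP (trim_idem s)).

(* coordinate r_i (indexed from 0 here) *)
Definition coord (r : S) (i : nat) : nat := nth 0%N (proj1_sig r) i.

Definition sz (r : S) : nat := sumn (proj1_sig r).

Fixpoint below (s : seq nat) : seq (seq nat) :=
  match s with
  | [::] => [:: [::]]
  | a :: s' => [seq b :: t | b <- iota 0 a.+1, t <- below s']
  end.

Definition subl (s t : seq nat) : seq nat := [seq (x.1 - x.2)%N | x <- zip s t].

Section Series.
Variable R : realType.
Local Notation C := (mathcomp.real_closed.complex.complex R).

Definition cabs (z : C) : R :=
  let: mathcomp.real_closed.complex.Complex a b := z in Num.sqrt (a ^+ 2 + b ^+ 2).

(* A formal power series sum_r alpha_r X^r is given by its coefficient map. *)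
Definition series := S -> C.

Definition qm (m : nat) (f : series) : \bar R :=
  (\esum_(r in [set: S]) ((cabs (f r)) * (m%:R) ^+ (sz r))%:E)%E.

Definition inU (f : series) : Prop := forall m : nat, (qm m f < +oo)%E.

(* membership in U^(1): homogeneous linear series (sum_i |alpha_i| < oo
   is exactly q_1 f < oo, included in inU) *)
Definition inU1 (f : series) : Prop :=
  inU f /\ forall r : S, sz r <> 1%N -> f r = 0.

Definition addU (f g : series) : series := fun r => f r + g r.
Definition scaleU (c : C) (f : series) : series := fun r => c * f r.
Definition subU (f g : series) : series := fun r => f r - g r.
Definition oneU : series := fun r => if sz r == 0%N then 1 else 0.
(* Cauchy product: (fg)_r = sum_{r' + r'' = r} f_{r'} g_{r''} *)
Definition mulU (f g : series) : series := fun r =>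
  \sum_(t <- below (proj1_sig r)) f (toS t) * g (toS (subl (proj1_sig r) t)).

Definition fps := nat -> C.
Definition addP (a b : fps) : fps := fun n => a n + b n.
Definition scaleP (c : C) (a : fps) : fps := fun n => c * a n.
Definition oneP : fps := fun n => if n == 0%N then 1 else 0.
Definition mulP (a b : fps) : fps := fun n =>
  \sum_(k < n.+1) a k * b (n - k)%N.

(* The Frechet topology of U (relative topology on a subset D of U) has, at f,
   the neighbourhood base {g | q_m(g - f) < eps}; C[[X]] with coordinatewise
   convergence has, at a, the neighbourhood base
   {b | forall n <= N, |b_n - a_n| < eps}. *)
Definition contOn (D : series -> Prop) (T : series -> fps) : Prop :=
  forall f, D f ->
  forall (N : nat) (eps : R), 0 < eps ->
  exists (m : nat) (delta : R), 0 < delta /\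
    forall g, D g -> (qm m (subU g f) < delta%:E)%E ->
      forall n, (n <= N)%N -> cabs (T g n - T f n) < eps.

Definition linearOn (D : series -> Prop) (T : series -> fps) : Prop :=
  (forall f g, D f -> D g -> T (addU f g) = addP (T f) (T g)) /\
  (forall c f, D f -> T (scaleU c f) = scaleP c (T f)).

Definition unital_alg_homU (T : series -> fps) : Prop :=
  linearOn inU T /\
  (forall f g, inU f -> inU g -> T (mulU f g) = mulP (T f) (T g)) /\
  T oneU = oneP.

End Series.

(* Main.v *)
Require Import Defs.
From mathcomp Require Import all_boot all_order all_algebra.
From mathcomp Require Import all_classical all_reals.
From mathcomp Require Import ereal esum.
From mathcomp.real_closed Require Import complex.
From mathcomp Require Import ring lra.
Set Implicit Arguments. Unset Strict Implicit. Unset Printing Implicit Defensive.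
Import Order.TTheory GRing.Theory Num.Theory.
Local Open Scope classical_set_scope.
Local Open Scope ring_scope.

Section Cabs.
Variable R : realType.
Local Notation C := (complex R).

Lemma cabsE (z : C) : cabs z = Normc.normc z. Proof. by []. Qed.
Lemma cabs_ge0 (z : C) : 0 <= cabs z. Proof. by case: z => a b; exact: sqrtr_ge0. Qed.
Lemma cabsD (x y : C) : cabs (x + y) <= cabs x + cabs y.
Proof. by rewrite !cabsE; exact: le_normcD. Qed.
Lemma cabsM (x y : C) : cabs (x * y) = cabs x * cabs y.
Proof. by rewrite !cabsE; exact: Normc.normcM. Qed.
Lemma cabsN (x : C) : cabs (- x) = cabs x.
Proof. by rewrite !cabsE; exact: normcN. Qed.
Lemma cabs0 : cabs (0 : C) = 0.
Proof. by rewrite /cabs /= expr0n /= addr0 sqrtr0. Qed.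
Lemma cabs_eq0 (x : C) : cabs x = 0 -> x = 0.
Proof. by rewrite cabsE; exact: Normc.eq0_normc. Qed.
Lemma cabsB (x y : C) : cabs (x - y) = cabs (y - x).
Proof. by rewrite -cabsN opprB. Qed.
Lemma cabs_real (x : R) : cabs (x%:C)%C = `|x|.
Proof. by rewrite /cabs /= expr0n /= addr0 sqrtr_sqr. Qed.
Lemma cabs_Re (z : C) : `|complex.Re z| <= cabs z.
Proof.
case: z => a b /=; rewrite -sqrtr_sqr ler_sqrt ?addr_ge0 ?sqr_ge0 //.
by rewrite lerDl sqr_ge0.
Qed.
Lemma cabs_Im (z : C) : `|complex.Im z| <= cabs z.
Proof.
case: z => a b /=; rewrite -sqrtr_sqr ler_sqrt ?addr_ge0 ?sqr_ge0 //.
by rewrite lerDr sqr_ge0.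
Qed.
Lemma cabs_sum (I : Type) (s : seq I) (h : I -> C) :
  cabs (\sum_(i <- s) h i) <= \sum_(i <- s) cabs (h i).
Proof.
elim: s => [|a s IH]; first by rewrite !big_nil cabs0.
rewrite !big_cons; apply: le_trans (cabsD _ _) _; exact: lerD.
Qed.
Lemma cabs_tri (x y z : C) : cabs (x - z) <= cabs (x - y) + cabs (y - z).
Proof. by apply: le_trans (cabsD _ _); rewrite addrA subrK. Qed.

End Cabs.

Section Sums.
Variable R : realType.
Local Notation C := (complex R).
Variable T : choiceType.
Implicit Types (w : T -> R) (h g : T -> C).

Lemma sub_sum_le w (F0 F : seq T) : (forall x, 0 <= w x) -> uniq F0 -> uniq F ->
  {subset F0 <= F} -> \sum_(x <- F0) w x <= \sum_(x <- F) w x.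
Proof.
move=> w0 u0 u sub; rewrite [X in _ <= X](bigID (mem F0)) /=.
have -> : \sum_(x <- F | x \in F0) w x = \sum_(x <- F0) w x.
  rewrite -big_filter; apply: perm_big; apply: uniq_perm; rewrite ?filter_uniq // => x.
  by rewrite mem_filter; apply/andP/idP => [[]//|xF]; split=> //; exact: sub.
by rewrite lerDl sumr_ge0.
Qed.

Lemma esum_lb w (F : seq T) : (forall x, 0 <= w x) -> uniq F ->
  ((\sum_(x <- F) w x)%:E <= \esum_(x in [set: T]) (w x)%:E)%E.
Proof.
move=> w0 u; apply: esum_ge; exists [set` F]; first by split => //; exact: finite_seq.
by rewrite -fsbig_seq // sumEFin.
Qed.

Lemma esum_ub w (B : R) :
  (forall F : seq T, uniq F -> \sum_(x <- F) w x <= B) ->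
  (\esum_(x in [set: T]) (w x)%:E <= B%:E)%E.
Proof.
move=> H; apply: ge_ereal_sup => _ [X [finX _] <-].
by rewrite fsbig_finite // sumEFin lee_fin; apply: H; exact: finmap.fset_uniq.
Qed.

Lemma esum_approx w (e : R) : (forall x, 0 <= w x) ->
  (\esum_(x in [set: T]) (w x)%:E < +oo)%E -> 0 < e ->
  exists F0 : seq T, uniq F0 /\
    fine (\esum_(x in [set: T]) (w x)%:E) - e < \sum_(x <- F0) w x.
Proof.
move=> w0 fin e0; set E := esum _ _.
have E0 : (0 <= E)%E by apply: esum_ge0 => x _; rewrite lee_fin.
have Efin : E \is a fin_num by rewrite ge0_fin_numE.
have : ((fine E - e)%:E < E)%E by rewrite -[X in (_ < X)%E](fineK Efin) lte_fin ltrBlDr ltrDl.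
move=> /ereal_sup_gt [_ [X [finX _] <-]].
rewrite fsbig_finite // sumEFin lte_fin => H.
by exists (finmap.enum_fset (fset_set X)); split => //; exact: finmap.fset_uniq.
Qed.

Definition HasSum h (z : C) := forall e : R, 0 < e -> exists F0 : seq T,
  forall F : seq T, uniq F -> {subset F0 <= F} -> cabs (\sum_(x <- F) h x - z) < e.

Definition Bdd w := exists B : R, forall F : seq T, uniq F -> \sum_(x <- F) w x <= B.

Lemma HasSum_unique h z1 z2 : HasSum h z1 -> HasSum h z2 -> z1 = z2.
Proof.
move=> H1 H2; apply/eqP/negPn/negP => ne.
have e0 : 0 < cabs (z1 - z2) / 2.
  rewrite divr_gt0 // lt_def cabs_ge0 andbT; apply/eqP => /cabs_eq0 /eqP.
  by rewrite subr_eq0 (negPf ne).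
have [F1 HF1] := H1 _ e0; have [F2 HF2] := H2 _ e0.
have u := undup_uniq (F1 ++ F2).
have s1 : {subset F1 <= undup (F1 ++ F2)} by move=> x; rewrite mem_undup mem_cat => ->.
have s2 : {subset F2 <= undup (F1 ++ F2)} by move=> x; rewrite mem_undup mem_cat orbC => ->.
have := HF1 _ u s1; have := HF2 _ u s2.
set s := \sum_(x <- _) _ => a b.
have c := cabs_tri z1 s z2; rewrite (cabsB z1 s) in c.
have := le_lt_trans c (ltrD b a); by rewrite -splitr ltxx.
Qed.

Definition Sum h : C :=
  match pselect (exists z, HasSum h z) with
  | left P => proj1_sig (cid P)
  | right _ => 0
  end.

Lemma SumE h z : HasSum h z -> Sum h = z.
Proof.
move=> H; rewrite /Sum; case: pselect => [P|[]]; last by exists z.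
by case: (cid P) => /= z' H'; exact: HasSum_unique H' H.
Qed.

Lemma HasSum_ext h g z : (forall x, h x = g x) -> HasSum h z -> HasSum g z.
Proof. by move=> e; rewrite (funext e). Qed.

Lemma HasSum0 : HasSum (fun _ => 0) 0.
Proof. by move=> e e0; exists [::] => F _ _; rewrite big1 // subr0 cabs0. Qed.

Lemma HasSumD h g zh zg : HasSum h zh -> HasSum g zg ->
  HasSum (fun x => h x + g x) (zh + zg).
Proof.
move=> H G e e0; have e2 : 0 < e / 2 by rewrite divr_gt0.
have [F1 HF1] := H _ e2; have [F2 HF2] := G _ e2.
exists (F1 ++ F2) => F u sub.
have s1 : {subset F1 <= F} by move=> x xF; apply: sub; rewrite mem_cat xF.
have s2 : {subset F2 <= F} by move=> x xF; apply: sub; rewrite mem_cat xF orbT.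
rewrite big_split /= opprD addrACA.
apply: le_lt_trans (cabsD _ _) _; rewrite [e]splitr; exact: ltrD (HF1 _ u s1) (HF2 _ u s2).
Qed.

Lemma HasSumZ (c : C) h z : HasSum h z -> HasSum (fun x => c * h x) (c * z).
Proof.
move=> H e e0; have e1 : 0 < e / (cabs c + 1) by rewrite divr_gt0 // ltr_wpDl // cabs_ge0.
have [F0 HF0] := H _ e1; exists F0 => F u sub.
rewrite -mulr_sumr -mulrBr cabsM.
have := HF0 _ u sub => lt.
apply: le_lt_trans (_ : cabs c * (e / (cabs c + 1)) < e).
  by apply: ler_wpM2l; [exact: cabs_ge0| exact: ltW].
rewrite mulrA ltr_pdivrMr ?ltr_wpDl ?cabs_ge0 // mulrDr mulr1 mulrC ltrDl //.
Qed.

Lemma HasSumN h z : HasSum h z -> HasSum (fun x => - h x) (- z).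
Proof.
move=> H; have := HasSumZ (-1) H; rewrite mulN1r.
by apply: HasSum_ext => x; rewrite mulN1r.
Qed.

Lemma HasSumB h g zh zg : HasSum h zh -> HasSum g zg ->
  HasSum (fun x => h x - g x) (zh - zg).
Proof. by move=> H G; apply: HasSumD H (HasSumN G). Qed.

Lemma HasSum_big (I : Type) (s : seq I) (H : I -> T -> C) (z : I -> C) :
  (forall i, HasSum (H i) (z i)) ->
  HasSum (fun x => \sum_(i <- s) H i x) (\sum_(i <- s) z i).
Proof.
move=> Hs; elim: s => [|a s IH].
  by rewrite big_nil; apply: HasSum_ext HasSum0 => x; rewrite big_nil.
rewrite big_cons; apply: HasSum_ext (HasSumD (Hs a) IH) => x; by rewrite big_cons.
Qed.


Lemma cabs_small (x : C) : (forall e : R, 0 < e -> cabs x < e) -> x = 0.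
Proof.
move=> H; apply/eqP/negPn/negP => ne.
have e0 : 0 < cabs x.
  by rewrite lt_def cabs_ge0 andbT; apply/eqP => /cabs_eq0 /eqP; rewrite (negPf ne).
by have := H _ e0; rewrite ltxx.
Qed.

Lemma HasSum_bound h z (B : R) :
  (forall F : seq T, uniq F -> \sum_(x <- F) cabs (h x) <= B) -> HasSum h z -> cabs z <= B.
Proof.
move=> HB H; rewrite leNgt; apply/negP => lt.
have e0 : 0 < cabs z - B by rewrite subr_gt0.
have [F0 HF0] := H _ e0.
have sub : {subset F0 <= undup F0} by move=> x; rewrite mem_undup.
have := HF0 _ (undup_uniq F0) sub.
set s := \sum_(x <- _) _ => a.
have c := cabs_tri z s 0; rewrite !subr0 (cabsB z s) in c.
have d := le_trans (cabs_sum _ _) (HB _ (undup_uniq F0)).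
have := lt_le_trans (le_lt_trans c (ltr_leD a d)) (le_refl _).
by rewrite subrK ltxx.
Qed.


Lemma HasSum_single h (x0 : T) : (forall y, y != x0 -> h y = 0) -> HasSum h (h x0).
Proof.
move=> H e e0; exists [:: x0] => F u sub.
have x0F : x0 \in F by apply: sub; rewrite inE.
rewrite (big_rem x0) //= big_seq big1 ?addr0 ?subrr ?cabs0 // => y.
by rewrite mem_rem_uniq // inE => /andP[ne _]; exact: H.
Qed.

Lemma HasSum_nn w : (forall x, 0 <= w x) -> Bdd w ->
  exists W : R, HasSum (fun x => (w x)%:C%C) W%:C%C.
Proof.
move=> w0 [B HB].
have fin : (\esum_(x in [set: T]) (w x)%:E < +oo)%E.
  exact: le_lt_trans (esum_ub HB) (ltry _).
set E := esum _ _ in fin.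
have E0 : (0 <= E)%E by apply: esum_ge0 => x _; rewrite lee_fin.
have Efin : E \is a fin_num by rewrite ge0_fin_numE.
exists (fine E) => e e0.
have [F0 [u0 HF0]] := esum_approx w0 fin e0.
exists F0 => F u sub.
rewrite -rmorph_sum -rmorphB cabs_real.
have le1 := sub_sum_le w0 u0 u sub.
have le2 : \sum_(x <- F) w x <= fine E.
  by rewrite -lee_fin fineK //; exact: esum_lb.
rewrite ler0_norm ?subr_le0 // opprB ltrBlDr.
rewrite -ltrBlDl; apply: lt_le_trans HF0 le1.
Qed.

Lemma maxr0_sub (a : R) : Num.max a 0 - Num.max (- a) 0 = a.
Proof.
have [a0|a0] := leP 0 a.
  by rewrite max_r ?subr0 // oppr_le0.
by rewrite max_l ?sub0r ?opprK // oppr_ge0 ltW.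
Qed.

Lemma maxr0_le (a b : R) : `|a| <= b -> 0 <= Num.max a 0 /\ Num.max a 0 <= b.
Proof.
move=> ab; split; first by rewrite le_max lexx orbT.
rewrite ge_max (le_trans _ ab) ?ler_norm //=; exact: le_trans (normr_ge0 _) ab.
Qed.

Lemma HasSum_exists h : Bdd (fun x => cabs (h x)) -> exists z, HasSum h z.
Proof.
move=> [B HB].
pose p1 x := Num.max (complex.Re (h x)) 0.
pose n1 x := Num.max (- complex.Re (h x)) 0.
pose p2 x := Num.max (complex.Im (h x)) 0.
pose n2 x := Num.max (- complex.Im (h x)) 0.
have bnd (q : T -> R) : (forall x, `|q x| <= cabs (h x)) ->
    exists W, HasSum (fun x => (Num.max (q x) 0)%:C%C) W%:C%C.
  move=> qh; apply: HasSum_nn; first by move=> x; case: (maxr0_le (qh x)).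
  exists B => F u; apply: le_trans (HB F u); apply: ler_sum => x _.
  by case: (maxr0_le (qh x)).
have hRN x : `|- complex.Re (h x)| <= cabs (h x) by rewrite normrN; exact: cabs_Re.
have hIN x : `|- complex.Im (h x)| <= cabs (h x) by rewrite normrN; exact: cabs_Im.
have [P1 H1] := bnd _ (fun x => cabs_Re (h x)).
have [N1 H2] := bnd _ hRN.
have [P2 H3] := bnd _ (fun x => cabs_Im (h x)).
have [N2 H4] := bnd _ hIN.
have := HasSumD (HasSumB H1 H2) (HasSumZ 'i%C (HasSumB H3 H4)).
move=> /(HasSum_ext _) H; eexists; apply: H => x.
by rewrite -!rmorphB !maxr0_sub -complexE.
Qed.

End Sums.

Section Sums2.
Variable R : realType.
Local Notation C := (complex R).
Variables T U : choiceType.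

Lemma mul_div1_le (x e : R) : 0 <= x -> 0 <= e -> x * (e / (x + 1)) <= e.
Proof.
move=> x0 e0; rewrite mulrA ler_pdivrMr ?ltr_wpDl //.
by rewrite mulrDr mulr1 mulrC lerDl.
Qed.

Lemma HasSum_fiber (phi : T -> U) (fib : U -> seq T) (h : T -> C) z :
  (forall u, uniq (fib u)) -> (forall u x, (x \in fib u) = (phi x == u)) ->
  HasSum h z -> HasSum (fun u => \sum_(x <- fib u) h x) z.
Proof.
move=> ufib mfib H e e0; have [F0 HF0] := H _ e0.
exists (map phi F0) => Rl u sub.
rewrite -(big_map fib xpredT (fun s => \sum_(x <- s) h x)) -big_flatten /=; apply: HF0.
  elim: Rl u {sub} => [//|a Rl IH] /= /andP[aR uR].
  rewrite cat_uniq ufib IH // andbT /=; apply/hasPn => x /flattenP [s /mapP [b bR ->] xs].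
  rewrite mfib in xs; rewrite /= mfib (eqP xs); apply/negP => /eqP ab.
  by move: aR; rewrite -ab bR.
move=> x xF0; apply/flattenP; exists (fib (phi x)); last by rewrite mfib.
by apply: map_f; apply: sub; exact: map_f.
Qed.

Lemma HasSum_prod (u : T -> C) (v : U -> C) A B :
  HasSum u A -> HasSum v B -> Bdd (fun x => cabs (u x)) -> Bdd (fun y => cabs (v y)) ->
  HasSum (fun p : T * U => u p.1 * v p.2) (A * B).
Proof.
move=> HA HB [Bu Hu] [Bv Hv].
have Bu0 : 0 <= Bu by have := Hu [::] isT; rewrite big_nil.
have Bv0 : 0 <= Bv by have := Hv [::] isT; rewrite big_nil.
have uniq_ap (F : seq T) (G : seq U) : uniq F -> uniq G -> uniq [seq (a, b) | a <- F, b <- G].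
  move=> uF uG; apply: allpairs_uniq => // [[a b] [a' b']] _ _ /= [-> ->] //.
have [Z HZ] : exists Z, HasSum (fun p : T * U => u p.1 * v p.2) Z.
  apply: HasSum_exists; exists (Bu * Bv) => X uX.
  pose F := undup (map fst X); pose G := undup (map snd X).
  apply: (le_trans (sub_sum_le (F := [seq (a, b) | a <- F, b <- G]) _ uX _ _)).
  - by move=> p; exact: cabs_ge0.
  - by apply: uniq_ap; exact: undup_uniq.
  - move=> [a b] abX; apply: allpairs_f; rewrite mem_undup; apply/mapP; by exists (a, b).
  rewrite big_allpairs /=.
  under eq_bigr do under eq_bigr do rewrite cabsM.
  under eq_bigr do rewrite -mulr_sumr.
  rewrite -mulr_suml; apply: ler_pM.
  - by apply: sumr_ge0 => a _; exact: cabs_ge0.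
  - by apply: sumr_ge0 => a _; exact: cabs_ge0.
  - by apply: Hu; exact: undup_uniq.
  - by apply: Hv; exact: undup_uniq.
suff ZAB : Z = A * B by rewrite -ZAB.
apply/eqP; rewrite -subr_eq0; apply/eqP/cabs_small => e e0.
have e3 : 0 < e / 3 by rewrite divr_gt0.
have dB0 : 0 < e / 3 / (Bu + 1) by rewrite divr_gt0 // ltr_wpDl.
have dA0 : 0 < e / 3 / (cabs B + 1) by rewrite divr_gt0 // ltr_wpDl // cabs_ge0.
have [FA HFA] := HA _ dA0; have [FB HFB] := HB _ dB0; have [F0 HF0] := HZ _ e3.
pose F := undup (FA ++ map fst F0); pose G := undup (FB ++ map snd F0).
have uF : uniq F by exact: undup_uniq.
have uG : uniq G by exact: undup_uniq.
have sub0 : {subset F0 <= [seq (a, b) | a <- F, b <- G]}.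
  move=> [a b] pF0; apply: allpairs_f; rewrite mem_undup mem_cat; apply/orP; right;
    apply/mapP; by exists (a, b).
have h1 := HF0 _ (uniq_ap _ _ uF uG) sub0.
have h2 := HFA _ uF (fun x xF => ltac:(by rewrite mem_undup mem_cat xF)).
have h3 := HFB _ uG (fun x xF => ltac:(by rewrite mem_undup mem_cat xF)).
have eS : \sum_(p <- [seq (a, b) | a <- F, b <- G]) u p.1 * v p.2 =
    (\sum_(i <- F) u i) * (\sum_(i <- G) v i).
  by rewrite big_allpairs mulr_suml; apply: eq_bigr => a _; rewrite mulr_sumr.
rewrite eS in h1.
set sA := \sum_(i <- F) u i in h1 h2; set sB := \sum_(i <- G) v i in h1 h3.
have hsA : cabs sA <= Bu by apply: le_trans (cabs_sum _ _) (Hu _ uF).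
have e1 : sA * sB - A * B = sA * (sB - B) + (sA - A) * B by ring.
have h4 : cabs (sA * sB - A * B) <= e / 3 + e / 3.
  rewrite e1; apply: le_trans (cabsD _ _) _; rewrite !cabsM; apply: lerD.
    apply: le_trans (_ : Bu * (e / 3 / (Bu + 1)) <= _); last exact: mul_div1_le (ltW e3).
    by apply: ler_pM; rewrite ?cabs_ge0 // ltW.
  rewrite mulrC.
  apply: le_trans (_ : cabs B * (e / 3 / (cabs B + 1)) <= _); last by apply: mul_div1_le (ltW e3); exact: cabs_ge0.
  by apply: ler_pM; rewrite ?cabs_ge0 // ltW.
have := cabs_tri Z (sA * sB) (A * B); rewrite (cabsB Z (sA * sB)) => h5.
apply: le_lt_trans h5 _.
have -> : e = e / 3 + (e / 3 + e / 3) by field.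
exact: ltr_leD h1 h4.
Qed.

End Sums2.

Section FPS.
Variable R : realType.
Local Notation C := (complex R).

Definition toPoly (n : nat) (a : fps R) : {poly C} := \poly_(i < n.+1) a i.

Lemma mulP_poly (a b : fps R) n k : (k <= n)%N ->
  mulP a b k = (toPoly n a * toPoly n b)`_k.
Proof.
move=> kn; rewrite coefM /mulP; apply: eq_bigr => j _.
rewrite /toPoly !coef_poly.
have jk : (j < n.+1)%N by apply: leq_ltn_trans (leq_ord j) _; rewrite ltnS.
have jk2 : (k - j < n.+1)%N by rewrite ltnS; apply: leq_trans (leq_subr _ _) kn.
by rewrite jk jk2.
Qed.

Lemma coef_toPoly n a k : (k <= n)%N -> (toPoly n a)`_k = a k.
Proof. by move=> kn; rewrite /toPoly coef_poly ltnS kn. Qed.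

Lemma mulPA (a b c : fps R) : mulP (mulP a b) c = mulP a (mulP b c).
Proof.
apply: funext => n.
have -> : mulP (mulP a b) c n = (toPoly n a * toPoly n b * toPoly n c)`_n.
  rewrite coefM /mulP; apply: eq_bigr => k _.
  have kn : (k <= n)%N by rewrite -ltnS.
  rewrite -(mulP_poly _ _ kn) coef_toPoly //; exact: leq_subr.
have -> : mulP a (mulP b c) n = (toPoly n a * (toPoly n b * toPoly n c))`_n.
  rewrite coefM /mulP; apply: eq_bigr => k _.
  have kn : (k <= n)%N by rewrite -ltnS.
  rewrite -(mulP_poly _ _ (leq_subr k n)) coef_toPoly //.
by rewrite mulrA.
Qed.

Lemma mulPC (a b : fps R) : mulP a b = mulP b a.
Proof. by apply: funext => n; rewrite !(mulP_poly _ _ (leqnn n)) mulrC. Qed.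

Lemma toPoly_one n : toPoly n (@oneP R) = 1.
Proof.
apply/polyP => k; rewrite /toPoly coef_poly coef1 /oneP.
by case: k => [|k] //=; case: ifP.
Qed.

Lemma mulP1 (a : fps R) : mulP a (@oneP R) = a.
Proof.
by apply: funext => n; rewrite (mulP_poly _ _ (leqnn n)) toPoly_one mulr1 coef_toPoly.
Qed.

Lemma mul1P (a : fps R) : mulP (@oneP R) a = a.
Proof. by rewrite mulPC mulP1. Qed.

Lemma mulPCA (a b c : fps R) : mulP a (mulP b c) = mulP b (mulP a c).
Proof. by rewrite -!mulPA (mulPC a b). Qed.

Definition powP (b : fps R) (k : nat) : fps R := iter k (mulP b) (@oneP R).

Lemma powP_add b k l : powP b (k + l) = mulP (powP b k) (powP b l).
Proof.
elim: k => [|k IH]; first by rewrite add0n /= mul1P.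
by rewrite addSn /= IH mulPA.
Qed.

Fixpoint Pl (bb : nat -> fps R) (s : seq nat) (j : nat) : fps R :=
  match s with
  | [::] => (@oneP R)
  | a :: s' => mulP (powP (bb j) a) (Pl bb s' j.+1)
  end.

Lemma Pl_trim bb s j : Pl bb (trim s) j = Pl bb s j.
Proof.
elim: s j => [//|a s IH] j /=.
case: ifP => [/andP[/eqP a0 /nilP st]|_] /=.
  by rewrite a0 /= mul1P -IH st.
by rewrite IH.
Qed.

Fixpoint addl (s t : seq nat) : seq nat :=
  match s, t with
  | [::], t => t
  | s, [::] => s
  | a :: s', b :: t' => (a + b)%N :: addl s' t'
  end.

Lemma Pl_addl bb s t j : Pl bb (addl s t) j = mulP (Pl bb s j) (Pl bb t j).
Proof.
elim: s t j => [|a s IH] [|b t] j /=; rewrite ?mul1P ?mulP1 //.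
rewrite IH powP_add.
rewrite -!mulPA; congr mulP.
by rewrite !mulPA (mulPC (powP _ b)).
Qed.

End FPS.

Section Comb.

Lemma nth_trim s i : nth 0%N (trim s) i = nth 0%N s i.
Proof.
elim: s i => [//|a s IH] i /=.
case: ifP => [/andP[/eqP a0 /nilP st]|_].
  by case: i => [|i] //=; rewrite -IH st nth_nil.
by case: i => [|i] //=.
Qed.

Lemma trim_nil s : (forall i, nth 0%N s i = 0%N) -> trim s = [::].
Proof.
elim: s => [//|a s IH] H /=.
have a0 : a = 0%N by exact: (H 0%N).
by rewrite IH ?a0 // => i; exact: (H i.+1).
Qed.

Lemma trim_eq s t : (forall i, nth 0%N s i = nth 0%N t i) -> trim s = trim t.
Proof.
elim: s t => [|a s IH] t H.
  by rewrite /= trim_nil // => i; rewrite -H nth_nil.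
case: t H => [|b t] H.
  by rewrite [RHS]/= trim_nil // => i; rewrite H nth_nil.
have ab : a = b by exact: (H 0%N).
have st : trim s = trim t by apply: IH => i; exact: (H i.+1).
by rewrite /= st ab.
Qed.

Lemma valS (r : S) : trim (proj1_sig r) = proj1_sig r.
Proof. by case: r => s /= /eqP. Qed.

Lemma S_eq (r1 r2 : S) : (forall i, Defs.coord r1 i = Defs.coord r2 i) -> r1 = r2.
Proof.
move=> H; apply: val_inj => /=; rewrite -valS -[RHS]valS; exact: trim_eq.
Qed.

Lemma coord_toS s i : Defs.coord (toS s) i = nth 0%N s i.
Proof. by rewrite /Defs.coord /= nth_trim. Qed.

Lemma toS_val (r : S) : toS (proj1_sig r) = r.
Proof. by apply: S_eq => i; rewrite coord_toS. Qed.

Lemma sumn_trim s : sumn (trim s) = sumn s.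
Proof.
elim: s => [//|a s IH] /=; case: ifP => [/andP[/eqP a0 /nilP st]|_] /=.
  by rewrite a0 -IH st.
by rewrite IH.
Qed.

Lemma sz_toS s : sz (toS s) = sumn s.
Proof. by rewrite /sz /= sumn_trim. Qed.

Lemma nth_addl s t i : nth 0%N (addl s t) i = (nth 0%N s i + nth 0%N t i)%N.
Proof.
elim: s t i => [|a s IH] [|b t] i //=; rewrite ?nth_nil ?addn0 //.
by case: i => [|i] //=.
Qed.

Lemma sumn_addl s t : sumn (addl s t) = (sumn s + sumn t)%N.
Proof.
elim: s t => [|a s IH] [|b t] //=; rewrite ?addn0 // IH.
by rewrite -!addnA (addnCA b).
Qed.

Definition addS (a b : S) : S := toS (addl (proj1_sig a) (proj1_sig b)).

Lemma coord_addS a b i : Defs.coord (addS a b) i = (Defs.coord a i + Defs.coord b i)%N.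
Proof. by rewrite coord_toS nth_addl. Qed.

Lemma sz_addS a b : sz (addS a b) = (sz a + sz b)%N.
Proof. by rewrite sz_toS sumn_addl. Qed.

Lemma below_cons a s : below (a :: s) = [seq b :: t | b <- iota 0 a.+1, t <- below s].
Proof. by []. Qed.

Lemma mem_below s t :
  (t \in below s) = (size t == size s) && [forall i : 'I_(size s), nth 0%N t i <= nth 0%N s i]%N.
Proof.
elim: s t => [|a s IH] t.
  by rewrite /= inE; case: t => //=; apply/esym/forallP => [[]].
rewrite below_cons.
apply/allpairsP/andP => [[[b t'] [bi t'b ->]]|[/eqP st H]].
  move: bi t'b; rewrite [(b, t').1]/= [(b, t').2]/= => bi t'b.
  rewrite mem_iota add0n ltnS in bi; move: t'b; rewrite IH => /andP[/eqP st' H].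
  split; first by rewrite /= st'.
  apply/forallP => -[[|i] ilt] //; have ilt' : (i < size s)%N by [].
  exact: (forallP H (Ordinal ilt')).
case: t st H => [//|b t'] [st'] H.
exists (b, t'); rewrite [(b, t').1]/= [(b, t').2]/=; split => //.
  by rewrite mem_iota add0n ltnS; exact: (forallP H (@Ordinal (size s).+1 0 isT)).
rewrite IH st' eqxx /=; apply/forallP => -[i ilt].
have ilt' : (i.+1 < (size s).+1)%N by [].
exact: (forallP H (Ordinal ilt')).
Qed.

Lemma below_uniq s : uniq (below s).
Proof.
elim: s => [//|a s IH]; rewrite below_cons; apply: allpairs_uniq => //; first exact: iota_uniq.
by move=> [b t] [b' t'] _ _ /= [-> ->].
Qed.

Lemma nth_subl s t i : size t = size s ->
  nth 0%N (subl s t) i = (nth 0%N s i - nth 0%N t i)%N.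
Proof.
move=> st; rewrite /subl.
have [ilt|ige] := ltnP i (size s).
  rewrite (nth_map (0, 0)%N) ?size_zip ?st ?minnn // nth_zip //.
rewrite !nth_default ?st //; rewrite size_map size_zip st minnn //.
Qed.

Definition fib (r : S) : seq (S * S) :=
  [seq (toS t, toS (subl (proj1_sig r) t)) | t <- below (proj1_sig r)].

Lemma mem_below_nth s t : t \in below s -> size t = size s /\ forall i, (nth 0%N t i <= nth 0%N s i)%N.
Proof.
rewrite mem_below => /andP[/eqP st H]; split => // i.
have [ilt|ige] := ltnP i (size s); first exact: (forallP H (Ordinal ilt)).
by rewrite nth_default ?st.
Qed.

Lemma mem_fib r p : (p \in fib r) = (addS p.1 p.2 == r).
Proof.
apply/mapP/eqP => [[t tb ->]|<-] /=.
  have [st H] := mem_below_nth tb.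
  apply: S_eq => i; rewrite coord_addS !coord_toS nth_subl // subnKC //.
pose s := proj1_sig (addS p.1 p.2).
pose t := mkseq (fun i => Defs.coord p.1 i) (size s).
have ct i : Defs.coord p.1 i = nth 0%N t i.
  have [ilt|ige] := ltnP i (size s); first by rewrite nth_mkseq.
  rewrite nth_default ?size_mkseq //.
  have : Defs.coord (addS p.1 p.2) i = 0%N by rewrite /Defs.coord nth_default.
  by rewrite coord_addS => /eqP; rewrite addn_eq0 => /andP[/eqP].
have tb : t \in below s.
  rewrite mem_below size_mkseq eqxx /=; apply/forallP => i.
  rewrite -ct; have := coord_addS p.1 p.2 i; rewrite /Defs.coord => ->; exact: leq_addr.
exists t => //; apply: injective_projections => /=.
  by apply: S_eq => i; rewrite coord_toS ct.
apply: S_eq => i; rewrite coord_toS nth_subl ?size_mkseq //.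
by rewrite nth_trim nth_addl -ct addKn.
Qed.

Lemma fib_uniq r : uniq (fib r).
Proof.
rewrite map_inj_in_uniq ?below_uniq // => t t' tb t'b [e _].
have [st H] := mem_below_nth tb; have [st' H'] := mem_below_nth t'b.
apply: (@eq_from_nth _ 0%N); first by rewrite st st'.
move=> i _; by rewrite -(nth_trim t) -(nth_trim t') e.
Qed.

End Comb.

Section Main.
Variable R : realType.
Local Notation C := (complex R).
Local Notation series := (series R).
Local Notation fps := (fps R).
Implicit Types (f g : series).

Definition wq (m : nat) (f : series) (r : S) : R := cabs (f r) * (m%:R) ^+ sz r.

Lemma wq_ge0 m f r : 0 <= wq m f r.
Proof. by rewrite /wq mulr_ge0 ?cabs_ge0 // exprn_ge0 // ler0n. Qed.

Lemma qmE m f : qm m f = \esum_(r in [set: S]) (wq m f r)%:E.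
Proof. by []. Qed.

Lemma qm_ge0 m f : (0 <= qm m f)%E.
Proof. by apply: esum_ge0 => r _; rewrite lee_fin wq_ge0. Qed.

Lemma qm_fin m f : (qm m f < +oo)%E -> qm m f \is a fin_num.
Proof. by move=> H; rewrite ge0_fin_numE // qm_ge0. Qed.

Lemma qm_sum_le m f (F : seq S) : (qm m f < +oo)%E -> uniq F ->
  \sum_(r <- F) wq m f r <= fine (qm m f).
Proof.
move=> H u; rewrite -lee_fin fineK ?qm_fin //; apply: esum_lb => //; exact: wq_ge0.
Qed.

Lemma qm_le m f (B : R) : (forall F : seq S, uniq F -> \sum_(r <- F) wq m f r <= B) ->
  (qm m f <= B%:E)%E.
Proof. by move=> H; exact: esum_ub. Qed.

Lemma inU_Bdd f m : inU f -> Bdd (wq m f).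
Proof. by move=> H; exists (fine (qm m f)) => F u; exact: qm_sum_le. Qed.

Lemma Bdd_inU f : (forall m, Bdd (wq m f)) -> inU f.
Proof.
move=> H m; have [B HB] := H m.
exact: le_lt_trans (qm_le HB) (ltry _).
Qed.

Definition zeroU : series := fun _ => 0.
Definition delta (x : S) : series := fun r => if r == x then 1 else 0.
Definition restr (P : pred S) (f : series) : series := fun r => if P r then f r else 0.

Lemma sum_single (w : S -> R) (x : S) (F : seq S) : uniq F -> (forall r, 0 <= w r) ->
  \sum_(r <- F) (if r == x then w r else 0) <= w x.
Proof.
move=> u w0; rewrite -big_mkcond /=.
case: (boolP (x \in F)) => xF.
  rewrite (big_rem x) //= eqxx big_seq_cond big1 ?addr0 // => y /andP[].
  by rewrite mem_rem_uniq // inE => /andP[/negPf ->].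
rewrite big_seq_cond big1 // => y /andP[yF /eqP yx]; move: xF; by rewrite -yx yF.
Qed.

Lemma inU1_restr P f : inU1 f -> inU1 (restr P f).
Proof.
move=> [fU f1]; split; last by move=> r /f1; rewrite /restr => ->; case: (P r).
apply: Bdd_inU => m; have [B HB] := inU_Bdd m fU; exists B => F u.
apply: le_trans (HB F u); apply: ler_sum => r _; rewrite /wq /restr.
case: (P r) => //; rewrite cabs0 mul0r; exact: wq_ge0.
Qed.

Lemma zeroU_inU1 : inU1 zeroU.
Proof.
split => // m; apply: le_lt_trans (qm_le (B := 0) _) (ltry _) => F u.
by rewrite big1 // => r _; rewrite /wq cabs0 mul0r.
Qed.

Lemma delta_inU1 x : sz x = 1%N -> inU1 (delta x).
Proof.
move=> sx; split; last by move=> r; rewrite /delta; case: eqP => // -> /(_ sx).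
apply: Bdd_inU => m; exists (wq m (delta x) x) => F u.
have -> : \sum_(r <- F) wq m (delta x) r = \sum_(r <- F) (if r == x then wq m (delta x) r else 0).
  apply: eq_bigr => r _; case: eqP => // /eqP; rewrite /wq /delta => /negPf ->.
  by rewrite cabs0 mul0r.
apply: sum_single => //; exact: wq_ge0.
Qed.

Variable beta : series -> fps.
Hypothesis hlin : linearOn (@inU1 R) beta.
Hypothesis hcont : contOn (@inU1 R) beta.

Definition unitS (i : nat) : S := toS (rcons (nseq i 0%N) 1%N).
Definition bb (i : nat) : fps := beta (delta (unitS i)).
Definition PP (r : S) : fps := Pl bb (proj1_sig r) 0.
Definition betabar f : fps := fun n => Sum (fun r => f r * PP r n).

Lemma beta_zero : beta zeroU = fun _ => 0.
Proof.
have e : scaleU 0 zeroU = zeroU by apply: funext => r; rewrite /scaleU mul0r.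
have := hlin.2 0 _ zeroU_inU1; rewrite e => ->.
by apply: funext => n; rewrite /scaleP mul0r.
Qed.

Lemma sumn0_nth s : sumn s = 0%N -> forall i, nth 0%N s i = 0%N.
Proof.
elim: s => [|b s IH] /= h i; first by rewrite nth_nil.
move: h => /eqP; rewrite addn_eq0 => /andP[/eqP b0 /eqP h].
by case: i => [|i] //=; exact: IH.
Qed.

Lemma trimmed_sum1 s : trim s = s -> sumn s = 1%N -> s = rcons (nseq (size s).-1 0%N) 1%N.
Proof.
elim: s => [//|a s IH] /= ts.
have ts' : trim s = s.
  by move: ts; case: ifP => // _ [].
case: a ts => [|[|a]] ts /=.
- rewrite add0n => s1; rewrite {1}(IH ts' s1); case: s {IH ts ts'} s1 => //.
- move=> /eqP; rewrite -{2}[1%N]addn0 eqn_add2l => /eqP s0.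
  have : trim s = [::].
    by apply: trim_nil; exact: sumn0_nth.
  by rewrite ts' => ->.
- by rewrite !addSn.
Qed.

Lemma Pl_unit i j : Pl bb (rcons (nseq i 0%N) 1%N) j = bb (i + j)%N.
Proof.
elim: i j => [|i IH] j /=; first by rewrite mulP1 /powP /= mulP1.
by rewrite mul1P IH addSnnS.
Qed.

Lemma PP_unit x : sz x = 1%N -> PP x = beta (delta x).
Proof.
move=> sx; have := trimmed_sum1 (valS x) sx => e.
have -> : x = unitS (size (proj1_sig x)).-1.
  by rewrite /unitS -e toS_val.
by rewrite /PP /= Pl_trim Pl_unit addn0.
Qed.

Lemma sz0 r : sz r = 0%N -> r = toS [::].
Proof.
move=> s0; apply: S_eq => i; rewrite coord_toS nth_nil /Defs.coord.
exact: sumn0_nth.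
Qed.

Lemma PP_zero : PP (toS [::]) = @oneP R.
Proof. by []. Qed.

Lemma PP_add a b : PP (addS a b) = mulP (PP a) (PP b).
Proof. by rewrite /PP /addS /= Pl_trim Pl_addl. Qed.


Lemma cabs1 : cabs (1 : C) = 1.
Proof. exact: Normc.normc1. Qed.

Lemma inU1_scale c f : inU1 f -> inU1 (scaleU c f).
Proof.
move=> [fU f1]; split; last by move=> r /f1; rewrite /scaleU => ->; rewrite mulr0.
apply: Bdd_inU => m; have [B HB] := inU_Bdd m fU; exists (cabs c * B) => F u.
rewrite /wq /scaleU; under eq_bigr do rewrite cabsM -mulrA.
rewrite -mulr_sumr; apply: ler_wpM2l; [exact: cabs_ge0| exact: HB].
Qed.

Lemma sz_unitS i : sz (unitS i) = 1%N.
Proof. by rewrite sz_toS -cats1 sumn_cat sumn_nseq. Qed.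

Lemma bb_bound N : exists M : R, 0 <= M /\ forall i k, (k <= N)%N -> cabs (bb i k) <= M.
Proof.
have [m0 [d [d0 H]]] := hcont zeroU_inU1 N ltr01.
have m1 : 0 < (m0.+1)%:R :> R by rewrite ltr0n.
pose c := d / (m0.+1)%:R.
have c0 : 0 < c by rewrite divr_gt0.
exists (1 / c); split; first by rewrite divr_ge0 // ltW.
move=> i k kN.
pose x := unitS i.
pose g := scaleU (c%:C)%C (delta x).
have gI : inU1 g by apply: inU1_scale; apply: delta_inU1; exact: sz_unitS.
have gq : (qm m0 (subU g zeroU) < d%:E)%E.
  apply: le_lt_trans (qm_le (B := c * m0%:R) _) _; last first.
    rewrite lte_fin /c mulrAC ltr_pdivrMr // ltr_pM2l // ltr_nat //.
  move=> F u.
  have -> : \sum_(r <- F) wq m0 (subU g zeroU) r =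
      \sum_(r <- F) (if r == x then wq m0 (subU g zeroU) r else 0).
    apply: eq_bigr => r _; case: eqP => // /eqP; rewrite /wq /subU /g /scaleU /delta /zeroU.
    by move=> /negPf ->; rewrite mulr0 subr0 cabs0 mul0r.
  apply: le_trans (@sum_single (wq m0 (subU g zeroU)) x F u (wq_ge0 _ _)) _.
  rewrite /wq /subU /g /scaleU /delta /zeroU eqxx mulr1 subr0 cabs_real sz_unitS expr1.
  by rewrite ger0_norm // ltW.
have := H g gI gq k kN.
rewrite beta_zero subr0 /g (hlin.2 _ _ (delta_inU1 (sz_unitS i))) /scaleP cabsM cabs_real.
rewrite ger0_norm ?(ltW c0) // -/(bb i) => lt.
by rewrite ler_pdivlMr // mulrC ltW.
Qed.

Lemma mulP_bound (a b : fps) (A B : R) N :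
  (forall k, (k <= N)%N -> cabs (a k) <= A) -> (forall k, (k <= N)%N -> cabs (b k) <= B) ->
  forall k, (k <= N)%N -> cabs (mulP a b k) <= N.+1%:R * (A * B).
Proof.
move=> Ha Hb k kN.
have A0 : 0 <= A by apply: le_trans (cabs_ge0 _) (Ha 0%N isT).
have B0 : 0 <= B by apply: le_trans (cabs_ge0 _) (Hb 0%N isT).
apply: le_trans (cabs_sum _ _) _.
apply: le_trans (_ : \sum_(i < k.+1) (A * B) <= _).
  apply: ler_sum => i _; rewrite cabsM; apply: ler_pM; rewrite ?cabs_ge0 //.
    by apply: Ha; apply: leq_trans (leq_ord i) kN.
  by apply: Hb; apply: leq_trans (leq_subr _ _) kN.
rewrite sumr_const card_ord -[in leLHS]mulr_natl; apply: ler_wpM2r; first exact: mulr_ge0.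
by rewrite ler_nat ltnS.
Qed.

Lemma powP_bound (b : fps) (M : R) N :
  (forall k, (k <= N)%N -> cabs (b k) <= M) ->
  forall a (X : fps) (x : R), (forall k, (k <= N)%N -> cabs (X k) <= x) ->
  forall k, (k <= N)%N -> cabs (mulP (powP b a) X k) <= (N.+1%:R * M) ^+ a * x.
Proof.
move=> Hb; elim => [|a IH] X x HX k kN.
  by rewrite /powP /= mul1P expr0 mul1r; exact: HX.
rewrite /powP /= mulPA -/(powP b a).
apply: le_trans (mulP_bound Hb (IH X x HX) kN) _.
by rewrite exprS !mulrA.
Qed.

Lemma oneP_bound k : cabs ((@oneP R) k) <= 1.
Proof. by rewrite /oneP; case: eqP => _; rewrite ?cabs1 ?cabs0 ?ler01. Qed.

Lemma Pl_bound (M : R) N : (forall i k, (k <= N)%N -> cabs (bb i k) <= M) ->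
  forall s j k, (k <= N)%N -> cabs (Pl bb s j k) <= (N.+1%:R * M) ^+ sumn s.
Proof.
move=> HM; elim => [|a s IH] j k kN /=; first by rewrite expr0; exact: oneP_bound.
apply: le_trans (powP_bound (HM j) a (IH j.+1) kN) _.
by rewrite exprD.
Qed.

Lemma Pbound N : exists m : nat, forall r k, (k <= N)%N -> cabs (PP r k) <= m%:R ^+ sz r.
Proof.
have [M [M0 HM]] := bb_bound N.
pose L := N.+1%:R * M.
have L0 : 0 <= L by rewrite mulr_ge0 // ler0n.
exists (Num.Def.trunc L).+1 => r k kN.
apply: le_trans (Pl_bound HM _ _ kN) _.
rewrite -/L; apply: lerXn2r; rewrite ?nnegrE ?ler0n //.
exact: ltW (truncnS_gt L).
Qed.


Lemma Bdd_fPP f n : inU f -> Bdd (fun r => cabs (f r * PP r n)).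
Proof.
move=> fU; have [m Hm] := Pbound n; have [B HB] := inU_Bdd m fU.
exists B => F u; apply: le_trans (HB F u); apply: ler_sum => r _.
rewrite cabsM /wq; apply: ler_wpM2l; [exact: cabs_ge0 | exact: Hm].
Qed.

Lemma HS f n : inU f -> HasSum (fun r => f r * PP r n) (betabar f n).
Proof.
move=> fU; have [z Hz] := HasSum_exists (Bdd_fPP n fU).
by rewrite /betabar (SumE Hz).
Qed.

Lemma betabar_add f g : inU f -> inU g -> betabar (addU f g) = addP (betabar f) (betabar g).
Proof.
move=> fU gU; apply: funext => n; rewrite /addP; apply: SumE.
by apply: HasSum_ext (HasSumD (HS n fU) (HS n gU)) => r; rewrite /addU mulrDl.
Qed.

Lemma betabar_scale c f : inU f -> betabar (scaleU c f) = scaleP c (betabar f).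
Proof.
move=> fU; apply: funext => n; rewrite /scaleP; apply: SumE.
by apply: HasSum_ext (HasSumZ c (HS n fU)) => r; rewrite /scaleU mulrA.
Qed.

Lemma betabar_one : betabar (@oneU R) = @oneP R.
Proof.
apply: funext => n; rewrite /betabar.
have H : forall y, y != toS [::] -> (@oneU R) y * PP y n = 0.
  move=> y ny; rewrite /oneU; case: eqP => [/sz0 e|_]; last by rewrite mul0r.
  by move: ny; rewrite e eqxx.
rewrite (SumE (HasSum_single H)) /oneU sz_toS /= mul1r PP_zero //.
Qed.

Lemma betabar_cont : contOn (@inU R) betabar.
Proof.
move=> f fU N e e0.
have [m Hm] := Pbound N.
exists m, e; split => // g gU gq n nN.
have H := HasSumB (HS n gU) (HS n fU).
have fin : (qm m (subU g f) < +oo)%E by exact: lt_trans gq (ltry _).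
apply: le_lt_trans (HasSum_bound (B := fine (qm m (subU g f))) _ H) _.
  move=> F u; apply: le_trans (qm_sum_le fin u); apply: ler_sum => r _.
  rewrite -mulrBl cabsM /wq /subU; apply: ler_wpM2l; [exact: cabs_ge0| exact: Hm].
by rewrite -lte_fin fineK ?qm_fin.
Qed.


Lemma betabar_mul f g : inU f -> inU g -> betabar (mulU f g) = mulP (betabar f) (betabar g).
Proof.
move=> fU gU; apply: funext => n; rewrite /betabar; apply: SumE.
pose H (p : S * S) := f p.1 * g p.2 * PP (addS p.1 p.2) n.
have Hk (k : 'I_n.+1) : HasSum (fun p : S * S => (f p.1 * PP p.1 k) * (g p.2 * PP p.2 (n - k)%N))
    (betabar f k * betabar g (n - k)%N).
  exact: HasSum_prod (HS k fU) (HS (n - k) gU) (Bdd_fPP k fU) (Bdd_fPP (n - k) gU).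
have H1 : HasSum H (mulP (betabar f) (betabar g) n).
  apply: HasSum_ext (@HasSum_big _ _ _ (index_enum 'I_n.+1) _ _ Hk) => p.
  rewrite /H PP_add /mulP mulr_sumr; apply: eq_bigr => k _.
  by rewrite mulrACA.
have H2 := HasSum_fiber (phi := fun p : S * S => addS p.1 p.2) fib_uniq (fun r p => mem_fib r p) H1.
apply: HasSum_ext H2 => r.
rewrite big_seq (eq_bigr (fun p => f p.1 * g p.2 * PP r n)); last first.
  by move=> p; rewrite mem_fib /H => /eqP ->.
rewrite -big_seq -mulr_suml /mulU /fib big_map //.
Qed.

Theorem betabar_hom : unital_alg_homU betabar.
Proof.
split; first by split => [f g fU gU|c f fU]; [exact: betabar_add | exact: betabar_scale].
split; [exact: betabar_mul | exact: betabar_one].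
Qed.


Lemma beta_restr f (F : seq S) n : inU1 f -> uniq F ->
  beta (restr (mem F) f) n = \sum_(x <- F) f x * PP x n.
Proof.
move=> fI; elim: F => [|x F IH] /=.
  have -> : restr (mem [::]) f = zeroU by apply: funext => r.
  by rewrite beta_zero big_nil.
move=> /andP[xF uF].
have -> : restr (mem (x :: F)) f = addU (restr (pred1 x) f) (restr (mem F) f).
  apply: funext => r; rewrite /addU /restr /= inE.
  case: eqP => [->|_] /=; last by rewrite add0r.
  by rewrite (negPf xF) addr0.
rewrite (hlin.1 _ _ (inU1_restr _ fI) (inU1_restr _ fI)) /addP IH // big_cons; congr (_ + _).
case: (eqVneq (sz x) 1%N) => sx.
  have -> : restr (pred1 x) f = scaleU (f x) (delta x).
    apply: funext => r; rewrite /restr /scaleU /delta /=.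
    by case: eqP => [->|_]; rewrite ?mulr1 ?mulr0.
  by rewrite (hlin.2 _ _ (delta_inU1 sx)) /scaleP PP_unit.
have fx : f x = 0 by apply: fI.2; apply/eqP.
have -> : restr (pred1 x) f = zeroU.
  by apply: funext => r; rewrite /restr /zeroU /=; case: eqP => // ->.
by rewrite beta_zero fx mul0r.
Qed.

Lemma betabar_ext f : inU1 f -> betabar f = beta f.
Proof.
move=> fI; have fU := fI.1; apply: funext => n.
apply/eqP; rewrite -subr_eq0; apply/eqP/cabs_small => e e0.
have e2 : 0 < e / 2 by rewrite divr_gt0.
have [m [d [d0 Hc]]] := hcont fI n e2.
have [F0 HF0] := HS n fU e2.
have d2 : 0 < d / 2 by rewrite divr_gt0.
have [F1 [u1 HF1]] := esum_approx (w := wq m f) (fun r => wq_ge0 m f r) (fU m) d2.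
pose F := undup (F0 ++ F1).
have uF : uniq F by exact: undup_uniq.
pose g := restr (mem F) f.
have gI : inU1 g by exact: inU1_restr.
have gq : (qm m (subU g f) < d%:E)%E.
  apply: le_lt_trans (qm_le (B := d / 2) _) _; last by rewrite lte_fin ltr_pdivrMr // ltr_pMr // ltr1n.
  move=> X uX.
  have -> : \sum_(r <- X) wq m (subU g f) r = \sum_(r <- X | r \notin F) wq m f r.
    rewrite [RHS]big_mkcond /=; apply: eq_bigr => r _; rewrite /wq /subU /g /restr.
    have rm : (mem F r : bool) = (r \in F) by []. rewrite rm.
    by case: (r \in F) => /=; rewrite ?subrr ?cabs0 ?mul0r // sub0r cabsN.
  have uY : uniq ([seq r <- X | r \notin F] ++ F).
    rewrite cat_uniq filter_uniq // uF andbT /=; apply/hasPn => r rF.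
    by rewrite mem_filter rF.
  have := qm_sum_le (fU m) uY; rewrite big_cat /= big_filter => h1.
  have h2 : \sum_(r <- F1) wq m f r <= \sum_(r <- F) wq m f r.
    apply: sub_sum_le => //; first exact: wq_ge0.
    by move=> r rF1; rewrite mem_undup mem_cat rF1 orbT.
  move: HF1 h1 h2; set Q := fine _; set a := \sum_(r <- X | _) _;
    set b := \sum_(r <- F1) _; set c := \sum_(r <- F) _ => h0 h1 h2.
  lra.
have h1 := Hc g gI gq n (leqnn n).
rewrite /g beta_restr // in h1.
have sub0 : {subset F0 <= F} by move=> r rF0; rewrite mem_undup mem_cat rF0.
have h2 := HF0 F uF sub0.
set s := \sum_(x <- F) _ in h1 h2.
have := cabs_tri (betabar f n) s (beta f n); rewrite (cabsB (betabar f n) s) => h3.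
apply: le_lt_trans h3 _; rewrite [e]splitr; exact: ltrD h2 h1.
Qed.

End Main.

Unset Implicit Arguments.
Set Strict Implicit.

Theorem theorem5p8 (R : realType) (beta : series R -> fps R) :
  linearOn (@inU1 R) beta -> contOn (@inU1 R) beta ->
  exists betabar : series R -> fps R,
    unital_alg_homU betabar /\ contOn (@inU R) betabar /\
    (forall f, inU1 f -> betabar f = beta f).
Proof.
move=> hlin hcont; exists (betabar beta); split; first exact: betabar_hom.
split; first exact: betabar_cont.
by move=> f fI; exact: betabar_ext.
Qed.
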